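(* Let $L\in\mathbb N$, let $\Lambda=\Lambda_L$, and let $W=S_1C_1S_2C_2$ be a walk of the form described below. Then there is a unitary operator (walk) $W_d$ on $\mathcal H$ such that $W_L=P_LW_dP_L^*$ is unitary on $P_L\mathcal H=\ell^2(\Lambda_L)\otimes\mathbb C^2$, and $W-W_d$ differs from zero only on the set $(\Delta\Lambda)_2=\{x\in\mathbb Z^2:\operatorname{dist}(x,\Delta\Lambda)\le 2\}$, i.e. $\langle x,s|(W-W_d)|y,s'\rangle=0$ unless $x,y\in(\Delta\Lambda)_2$.
   Context: $\mathcal H=\ell^2(\mathbb Z^2)\otimes\mathbb C^2$ with basis $|x,s\rangle$, $x\in\mathbb Z^2$, $s\in\{\pm1\}$. A walk of the considered form is $W=S_1C_1S_2C_2$, where each coin operator $C_j=\bigoplus_{x\in\mathbb Z^2}C_j(x)$ acts as $|x\rangle\otimes\psi\mapsto|x\rangle\otimes C_j(x)\psi$ with $C_j(x)$ a unitary $2\times2$ matrix, and the state-dependent shifts are $S_\alpha=\sum_{s=\pm1}t_\alpha^s\otimes P_s$, where $t_\alpha|x\rangle=|x+e_\alpha\rangle$ and $P_{\pm1}$ is the projection onto $|{\pm1}\rangle$. $\Lambda_L=\{x\in\mathbb Z^2:|x_1|\le L,|x_2|\le L\}$, $P_L:\mathcal H\to\ell^2(\Lambda_L)\otimes\mathbb C^2$ is the canonical projection, and $\Delta\Lambda$ is the boundary of the square $\{x:-L-1\le x_1\le L,\ -L-1\le x_2\le L\}$, i.e. the set of its points with $x_1\in\{-L-1,L\}$ or $x_2\in\{-L-1,L\}$.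 $\operatorname{dist}$ denotes the Euclidean distance in $\mathbb Z^2$. *)

(* Defs.v *)
From HB Require Import structures.
From mathcomp Require Import all_boot all_order all_algebra.
From mathcomp Require Import spectral.
From mathcomp Require Import complex.
From mathcomp Require Import reals.

Set Implicit Arguments.
Unset Strict Implicit.
Unset Printing Implicit Defensive.

Import Order.TTheory GRing.Theory Num.Theory.
Local Open Scope ring_scope.

(* A basis vector |x,s> of H = l^2(Z^2) (x) C^2 is indexed by a "site" (x,s);
   the spin s = +1 is encoded by [true], s = -1 by [false]. *)
Definition point := (int * int)%type.
Definition site := (point * bool)%type.

Definition spin (s : bool) : int := if s then 1 else -1.

Definition sidx (s : bool) : 'I_2 := if s then ord0 else ord_max.

(* Operators on H are described by their matrix elements
   K (x,s) (y,s') = <x,s| K |y,s'>. *)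
Definition kernel (C : Type) := site -> site -> C.

Definition box (x : point) (r : nat) : seq point :=
  [seq (x.1 + (i%:Z - r%:Z), x.2 + (j%:Z - r%:Z)) |
     i <- iota 0 (2 * r).+1, j <- iota 0 (2 * r).+1].

Definition sites_of (P : seq point) : seq site :=
  [seq (z, s) | z <- P, s <- [:: true; false]].

Definition nbhd (x : point) (r : nat) : seq site := sites_of (box x r).

Definition banded (C : nmodType) (r : nat) (K : kernel C) : Prop :=
  forall u v : site,
    (r < maxn `|u.1.1 - v.1.1|%N `|u.1.2 - v.1.2|%N)%N -> K u v = 0.

(* product of kernels, correct (finite sum) whenever A has range <= r *)
Definition kmul (C : pzSemiRingType) (r : nat) (A B : kernel C) : kernel C :=
  fun u v => \sum_(w <- nbhd u.1 r) A u w * B w v.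

Definition shift1 (C : pzSemiRingType) : kernel C := fun u v =>
  ((u.2 == v.2) && (u.1 == (v.1.1 + spin v.2, v.1.2)))%:R.
Definition shift2 (C : pzSemiRingType) : kernel C := fun u v =>
  ((u.2 == v.2) && (u.1 == (v.1.1, v.1.2 + spin v.2)))%:R.

Definition coin (C : pzSemiRingType) (c : point -> 'M[C]_2) : kernel C :=
  fun u v => (u.1 == v.1)%:R * c v.1 (sidx u.2) (sidx v.2).

Definition walk (C : pzSemiRingType) (c1 c2 : point -> 'M[C]_2) : kernel C :=
  kmul 1 (shift1 C) (kmul 0 (coin c1) (kmul 1 (shift2 C) (coin c2))).

(* A banded kernel of range r defines a (bounded) unitary operator on H:
   K^* K = 1 and K K^* = 1, the sums being finite. *)
Definition unitary_kernel (C : numClosedFieldType) (K : kernel C) : Prop :=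
  exists r : nat, banded r K /\
    forall u v : site,
      \sum_(w <- nbhd u.1 r) (K w u)^* * K w v = (u == v)%:R /\
      \sum_(w <- nbhd u.1 r) K u w * (K v w)^* = (u == v)%:R.

Definition LambdaL (L : nat) : seq point := box (0, 0) L.

Definition compression_unitary (C : numClosedFieldType) (L : nat) (K : kernel C) :
  Prop :=
  forall u v : site, u.1 \in LambdaL L -> v.1 \in LambdaL L ->
    \sum_(w <- sites_of (LambdaL L)) (K w u)^* * K w v = (u == v)%:R /\
    \sum_(w <- sites_of (LambdaL L)) K u w * (K v w)^* = (u == v)%:R.

Definition in_DeltaLambda (L : nat) (x : point) : Prop :=
  let a := - (L%:Z) - 1 in let b := L%:Z in
  [/\ a <= x.1 <= b, a <= x.2 <= b &
      [|| x.1 == a, x.1 == b, x.2 == a | x.2 == b]].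

Definition in_DeltaLambda2 (L : nat) (x : point) : Prop :=
  exists b : point, in_DeltaLambda L b /\
    (x.1 - b.1) ^+ 2 + (x.2 - b.2) ^+ 2 <= 4.

(* Main.v *)
Require Import Defs.
From HB Require Import structures.
From mathcomp Require Import all_boot all_order all_algebra.
From mathcomp Require Import spectral complex reals.
From mathcomp Require Import zify ring lra.
Import Order.TTheory GRing.Theory Num.Theory.
Local Open Scope ring_scope.
Lemma sum_ext (T : eqType) (V : nmodType) (s1 s2 : seq T) (F : T -> V) :
  uniq s1 -> uniq s2 ->
  (forall x, x \in s1 -> x \notin s2 -> F x = 0) ->
  (forall x, x \in s2 -> x \notin s1 -> F x = 0) ->
  \sum_(x <- s1) F x = \sum_(x <- s2) F x.
Proof.
move=> u1 u2 h1 h2.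
rewrite (bigID (mem s2)) /= [X in _ + X]big_seq_cond [X in _ + X]big1; last first.
  move=> x /andP[xs1 xs2]; exact: h1.
rewrite addr0 [RHS](bigID (mem s1)) /= [X in _ + X]big_seq_cond [X in _ + X]big1; last first.
  move=> x /andP[xs1 xs2]; exact: h2.
rewrite addr0 -big_filter -[RHS]big_filter; apply: perm_big; apply: uniq_perm; rewrite ?filter_uniq //.
by move=> x; rewrite !mem_filter andbC.
Qed.

Lemma sum_ind (T : eqType) (V : pzSemiRingType) (s : seq T) (a : T) (F : T -> V) :
  uniq s -> a \in s -> \sum_(w <- s) (w == a)%:R * F w = F a.
Proof.
move=> us ai; rewrite (@sum_ext _ _ s [:: a]).
- by rewrite big_seq1 eqxx mul1r.
- exact: us.
- by [].
- by move=> x _; rewrite inE => /negbTE ->; rewrite mul0r.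
- by move=> x; rewrite inE => /eqP ->; rewrite ai.
Qed.
Lemma mem_box (c x : point) (r : nat) :
  (x \in box c r) = [&& c.1 - r%:Z <= x.1, x.1 <= c.1 + r%:Z, c.2 - r%:Z <= x.2 & x.2 <= c.2 + r%:Z].
Proof.
case: x => x1 x2; case: c => c1 c2 /=.
apply/allpairsP/idP.
  case=> [[i j]] [] hi hj [-> ->]; move: hi hj; rewrite !mem_iota /= !add0n => hi hj.
  apply/and4P; split; lia.
case/and4P=> h1 h2 h3 h4.
exists (absz (x1 - c1 + r%:Z), absz (x2 - c2 + r%:Z)); rewrite !mem_iota /= !add0n.
split; [lia|lia|congr pair; lia].
Qed.

Lemma box_uniq c r : uniq (box c r).
Proof.
apply: allpairs_uniq; rewrite ?iota_uniq //.
move=> [i j] [i' j'] _ _ /= [h1 h2]; congr pair; lia.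
Qed.

Lemma mem_sites P (w : site) : (w \in sites_of P) = (w.1 \in P).
Proof.
case: w => p s; apply/allpairsP/idP.
  by case=> [[q t]] /= [qP _ [-> _]].
by move=> pP; exists (p, s); split => //; case: (s).
Qed.

Lemma sites_uniq P : uniq P -> uniq (sites_of P).
Proof.
move=> uP; apply: allpairs_uniq => //.
by move=> [i j] [i' j'] _ _ /= [-> ->].
Qed.

Lemma sum_sites (V : nmodType) P (F : site -> V) :
  \sum_(w <- sites_of P) F w = \sum_(p <- P) (F (p, true) + F (p, false)).
Proof.
rewrite /sites_of big_allpairs; apply: eq_bigr => p _.
by rewrite !big_cons big_nil /= addr0.
Qed.

Definition inL (L : nat) (p : point) : bool :=
  [&& - (L%:Z) <= p.1, p.1 <= L%:Z, - (L%:Z) <= p.2 & p.2 <= L%:Z].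

Definition d1 L (u : site) : site := let q := (u.1.1 - spin u.2, u.1.2) in
  if inL L q == inL L u.1 then (q, u.2) else (u.1, ~~ u.2).
Definition f1 L (u : site) : site := let q := (u.1.1 + spin u.2, u.1.2) in
  if inL L q == inL L u.1 then (q, u.2) else (u.1, ~~ u.2).
Definition d2 L (u : site) : site := let q := (u.1.1, u.1.2 - spin u.2) in
  if inL L q == inL L u.1 then (q, u.2) else (u.1, ~~ u.2).
Definition f2 L (u : site) : site := let q := (u.1.1, u.1.2 + spin u.2) in
  if inL L q == inL L u.1 then (q, u.2) else (u.1, ~~ u.2).
Definition t1 (u : site) : site := ((u.1.1 - spin u.2, u.1.2), u.2).
Definition t2 (u : site) : site := ((u.1.1, u.1.2 - spin u.2), u.2).

Lemma spinN s : spin (~~ s) = - spin s. Proof. by case: s. Qed.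

Lemma d1K L : cancel (f1 L) (d1 L).
Proof.
case=> [[x y] s]; rewrite /f1 /=; case: ifP => H; rewrite /d1 /=.
  by rewrite addrK eq_sym H.
by rewrite spinN opprK H negbK.
Qed.
Lemma f1K L : cancel (d1 L) (f1 L).
Proof.
case=> [[x y] s]; rewrite /d1 /=; case: ifP => H; rewrite /f1 /=.
  by rewrite subrK eq_sym H.
by rewrite spinN H negbK.
Qed.
Lemma d2K L : cancel (f2 L) (d2 L).
Proof.
case=> [[x y] s]; rewrite /f2 /=; case: ifP => H; rewrite /d2 /=.
  by rewrite addrK eq_sym H.
by rewrite spinN opprK H negbK.
Qed.
Lemma f2K L : cancel (d2 L) (f2 L).
Proof.
case=> [[x y] s]; rewrite /d2 /=; case: ifP => H; rewrite /f2 /=.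
  by rewrite subrK eq_sym H.
by rewrite spinN H negbK.
Qed.

Lemma spin_bd s : -1 <= spin s <= 1. Proof. by case: s. Qed.

Lemma d1_near L u : (d1 L u).1.2 = u.1.2 /\ u.1.1 - 1 <= (d1 L u).1.1 <= u.1.1 + 1.
Proof.
rewrite /d1; case: ifP => _ /=; have := spin_bd u.2; split => //; lia.
Qed.
Lemma f1_near L u : (f1 L u).1.2 = u.1.2 /\ u.1.1 - 1 <= (f1 L u).1.1 <= u.1.1 + 1.
Proof.
rewrite /f1; case: ifP => _ /=; have := spin_bd u.2; split => //; lia.
Qed.
Lemma d2_near L u : (d2 L u).1.1 = u.1.1 /\ u.1.2 - 1 <= (d2 L u).1.2 <= u.1.2 + 1.
Proof.
rewrite /d2; case: ifP => _ /=; have := spin_bd u.2; split => //; lia.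
Qed.
Lemma f2_near L u : (f2 L u).1.1 = u.1.1 /\ u.1.2 - 1 <= (f2 L u).1.2 <= u.1.2 + 1.
Proof.
rewrite /f2; case: ifP => _ /=; have := spin_bd u.2; split => //; lia.
Qed.

Lemma d1_inL L u : inL L (d1 L u).1 = inL L u.1.
Proof. by rewrite /d1; case: ifP => [/eqP|] //. Qed.
Lemma d2_inL L u : inL L (d2 L u).1 = inL L u.1.
Proof. by rewrite /d2; case: ifP => [/eqP|] //. Qed.

Lemma mem_nbhd c r w : (w \in nbhd c r) = (w.1 \in box c r).
Proof. exact: mem_sites. Qed.
Lemma nbhd_uniq c r : uniq (nbhd c r).
Proof. exact/sites_uniq/box_uniq. Qed.

Definition Wg (C : pzSemiRingType) (g1 g2 : site -> site) (c1 c2 : point -> 'M[C]_2) : kernel C :=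
  fun u v => \sum_(s <- [:: true; false])
     c1 (g1 u).1 (sidx (g1 u).2) (sidx s) * coin c2 (g2 ((g1 u).1, s)) v.
Arguments Wg {C}.

Lemma shift1E (C : pzSemiRingType) u w : shift1 C u w = (w == t1 u)%:R.
Proof.
rewrite /shift1; suff -> : ((u.2 == w.2) && (u.1 == (w.1.1 + spin w.2, w.1.2))) = (w == t1 u) by [].
case: w => [[a b] t]; case: u => [[x y] s]; rewrite /t1 /=.
apply/andP/eqP => [[/eqP -> /eqP [-> ->]]|[-> -> ->]].
  by rewrite addrK.
by rewrite eqxx subrK.
Qed.

Lemma shift2E (C : pzSemiRingType) u w : shift2 C u w = (w == t2 u)%:R.
Proof.
rewrite /shift2; suff -> : ((u.2 == w.2) && (u.1 == (w.1.1, w.1.2 + spin w.2))) = (w == t2 u) by [].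
case: w => [[a b] t]; case: u => [[x y] s]; rewrite /t2 /=.
apply/andP/eqP => [[/eqP -> /eqP [-> ->]]|[-> -> ->]].
  by rewrite addrK.
by rewrite eqxx subrK.
Qed.

Lemma kmul_shift1 (C : pzSemiRingType) (K : kernel C) u v :
  kmul 1 (shift1 C) K u v = K (t1 u) v.
Proof.
rewrite /kmul; under eq_bigr do rewrite shift1E.
apply: sum_ind; first exact: nbhd_uniq.
rewrite mem_nbhd mem_box /t1 /=; have := spin_bd u.2; lia.
Qed.

Lemma kmul_shift2 (C : pzSemiRingType) (K : kernel C) u v :
  kmul 1 (shift2 C) K u v = K (t2 u) v.
Proof.
rewrite /kmul; under eq_bigr do rewrite shift2E.
apply: sum_ind; first exact: nbhd_uniq.
rewrite mem_nbhd mem_box /t2 /=; have := spin_bd u.2; lia.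
Qed.

Lemma nbhd0 c : nbhd c 0 = [:: (c, true); (c, false)].
Proof. by case: c => x y; rewrite /nbhd /sites_of /box /= !subrr !addr0. Qed.

Lemma kmul_coin (C : pzSemiRingType) c (K : kernel C) u v :
  kmul 0 (coin c) K u v =
  \sum_(s <- [:: true; false]) c u.1 (sidx u.2) (sidx s) * K (u.1, s) v.
Proof.
by rewrite /kmul nbhd0 !big_cons !big_nil /coin /= eqxx !mul1r.
Qed.

Lemma walkE (C : pzSemiRingType) (c1 c2 : point -> 'M[C]_2) u v :
  walk c1 c2 u v = Wg t1 t2 c1 c2 u v.
Proof.
rewrite /walk kmul_shift1 kmul_coin /Wg; apply: eq_bigr => s _.
by rewrite kmul_shift2.
Qed.

Lemma geo L (x : point) : -(L%:Z) - 1 <= x.1 <= L%:Z + 1 -> -(L%:Z) - 1 <= x.2 <= L%:Z + 1 ->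
  [|| L%:Z <= x.1, x.1 <= -(L%:Z), L%:Z <= x.2 | x.2 <= -(L%:Z)] -> in_DeltaLambda2 L x.
Proof.
case: x => x1 x2 /= h1 h2 h3.
have sq : forall d : int, -1 <= d <= 1 -> d ^+ 2 <= 1.
  by move=> d hd; rewrite expr2; nia.
have fin : forall b1 b2 : int, -1 <= x1 - b1 <= 1 -> -1 <= x2 - b2 <= 1 ->
   in_DeltaLambda L (b1, b2) -> in_DeltaLambda2 L (x1, x2).
  move=> b1 b2 e1 e2 hb; exists (b1, b2); split => //=.
  have := sq _ e1; have := sq _ e2; lia.
case/or4P: h3 => h3.
- case h4: (x2 <= L%:Z); [apply: (fin L%:Z x2)|apply: (fin L%:Z L%:Z)];
  rewrite /in_DeltaLambda /=; try split; lia.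
- case h4: (x2 <= L%:Z); [apply: (fin (-(L%:Z) - 1) x2)|apply: (fin (-(L%:Z) - 1) L%:Z)];
  rewrite /in_DeltaLambda /=; try split; lia.
- case h4: (x1 <= L%:Z); [apply: (fin x1 L%:Z)|apply: (fin L%:Z L%:Z)];
  rewrite /in_DeltaLambda /=; try split; lia.
- case h4: (x1 <= L%:Z); [apply: (fin x1 (-(L%:Z) - 1))|apply: (fin L%:Z (-(L%:Z) - 1))];
  rewrite /in_DeltaLambda /=; try split; lia.
Qed.


Lemma sidx_eq (a b : bool) : (sidx a == sidx b) = (a == b).
Proof. by case: a; case: b. Qed.

Lemma unit_rows (C : numClosedFieldType) (M : 'M[C]_2) : M \is unitarymx ->
  forall a b : bool, \sum_(s <- [:: true; false]) M (sidx a) (sidx s) * (M (sidx b) (sidx s))^* = (a == b)%:R.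
Proof.
move=> /unitarymxP hM a b.
have := congr1 (fun N : 'M[C]_2 => N (sidx a) (sidx b)) hM => /=.
rewrite !mxE sidx_eq big_ord_recr big_ord_recr big_ord0 /= !mxE add0r => <-.
rewrite !big_cons big_nil addr0 /=.
by have -> : widen_ord (m:=2) (leqnSn 1) ord_max = ord0 :> 'I_2 by apply: val_inj.
Qed.

Lemma unit_cols (C : numClosedFieldType) (M : 'M[C]_2) : M \is unitarymx ->
  forall a b : bool, \sum_(s <- [:: true; false]) (M (sidx s) (sidx a))^* * M (sidx s) (sidx b) = (a == b)%:R.
Proof.
rewrite -trmxC_unitary => /unit_rows h a b; rewrite -h.
by apply: eq_bigr => s _; rewrite !mxE conjCK.
Qed.

Lemma Wg_nz (C : pzSemiRingType) g1 g2 (c1 c2 : point -> 'M[C]_2) u v :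
  Wg g1 g2 c1 c2 u v != 0 -> exists s, v.1 = (g2 ((g1 u).1, s)).1.
Proof.
rewrite /Wg !big_cons big_nil addr0 /coin.
case: (eqVneq (g2 ((g1 u).1, true)).1 v.1) => [e|n1]; first by exists true.
case: (eqVneq (g2 ((g1 u).1, false)).1 v.1) => [e|n2]; first by exists false.
by rewrite !mul0r !mulr0 addr0 eqxx.
Qed.

Lemma D_near (C : pzSemiRingType) L (c1 c2 : point -> 'M[C]_2) u v :
  Wg (d1 L) (d2 L) c1 c2 u v != 0 -> (v.1 \in box u.1 1) && (u.1 \in box v.1 1).
Proof.
move/Wg_nz => [s ->].
have [h1 h2] := d1_near L u; have [h3 h4] := d2_near L ((d1 L u).1, s).
rewrite !mem_box; move: h1 h2 h3 h4 => /=; lia.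
Qed.

Lemma D_inL (C : pzSemiRingType) L (c1 c2 : point -> 'M[C]_2) u v :
  Wg (d1 L) (d2 L) c1 c2 u v != 0 -> inL L v.1 = inL L u.1.
Proof. by move/Wg_nz => [s ->]; rewrite d2_inL /= d1_inL. Qed.

Lemma D_band (C : pzSemiRingType) L (c1 c2 : point -> 'M[C]_2) :
  banded 1 (Wg (d1 L) (d2 L) c1 c2).
Proof.
move=> u v h; apply/eqP; apply: contraTT h => /D_near; rewrite !mem_box; lia.
Qed.

Lemma alg2 (C : numClosedFieldType) (m00 m01 m10 m11 A0 A1 B0 B1 : C) :
  m00^* * m00 + m10^* * m10 = 1 -> m00^* * m01 + m10^* * m11 = 0 ->
  m01^* * m00 + m11^* * m10 = 0 -> m01^* * m01 + m11^* * m11 = 1 ->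
  (m00 * A0 + m01 * A1)^* * (m00 * B0 + m01 * B1) +
  (m10 * A0 + m11 * A1)^* * (m10 * B0 + m11 * B1) = A0^* * B0 + A1^* * B1.
Proof.
move=> h1 h2 h3 h4.
transitivity (A0^* * B0 * (m00^* * m00 + m10^* * m10) + A0^* * B1 * (m00^* * m01 + m10^* * m11)
  + A1^* * B0 * (m01^* * m00 + m11^* * m10) + A1^* * B1 * (m01^* * m01 + m11^* * m11)).
  by rewrite !rmorphD !rmorphM /=; ring.
by rewrite h1 h2 h3 h4; ring.
Qed.
Lemma natb1 (C : pzSemiRingType) : (true%:R : C) = 1. Proof. by []. Qed.
Lemma natb0 (C : pzSemiRingType) : (false%:R : C) = 0. Proof. by []. Qed.
Arguments unit_cols {C M}.
Arguments unit_rows {C M}.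
Arguments sum_ext {T V s1 s2 F}.

Lemma D_cols (C : numClosedFieldType) L (c1 c2 : point -> 'M[C]_2)
  (hc1 : forall x, c1 x \is unitarymx) (hc2 : forall x, c2 x \is unitarymx) a b :
  \sum_(w <- nbhd a.1 1) (Wg (d1 L) (d2 L) c1 c2 w a)^* * Wg (d1 L) (d2 L) c1 c2 w b
  = (a == b)%:R.
Proof.
pose G z x := \sum_(s <- [:: true; false]) c1 z.1 (sidx z.2) (sidx s) * coin c2 (d2 L (z.1, s)) x.
have GD : forall w x, Wg (d1 L) (d2 L) c1 c2 w x = G (d1 L w) x by [].
have Gnz : forall z x, G z x != 0 -> (z.1 \in box x.1 1).
  move=> z x h; have /Wg_nz [s ->] : Wg id (d2 L) c1 c2 z x != 0 by [].
  have [h3 h4] := d2_near L (z.1, s); rewrite mem_box; move: h3 h4 => /=; lia.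
transitivity (\sum_(z <- map (d1 L) (nbhd a.1 1)) (G z a)^* * G z b).
  by rewrite big_map.
have U1 : uniq (map (d1 L) (nbhd a.1 1)).
  by rewrite (map_inj_uniq (can_inj (f1K L))) nbhd_uniq.
have U2 : uniq (sites_of (box a.1 1)) by apply/sites_uniq/box_uniq.
have H1 : forall z, z \in map (d1 L) (nbhd a.1 1) -> z \notin sites_of (box a.1 1) ->
    (G z a)^* * G z b = 0.
  move=> z _ zS; have -> : G z a = 0.
    by apply/eqP; apply: contraNT zS => /Gnz; rewrite mem_sites.
  by rewrite conjC0 mul0r.
have H2 : forall z, z \in sites_of (box a.1 1) -> z \notin map (d1 L) (nbhd a.1 1) ->
    (G z a)^* * G z b = 0.
  move=> z _ zN; have : Wg (d1 L) (d2 L) c1 c2 (f1 L z) a = 0.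
    apply/eqP; apply: contraNT zN => /D_near /andP[_ h].
    by rewrite -[z](d1K L) map_f // mem_nbhd.
  by rewrite GD d1K => ->; rewrite conjC0 mul0r.
rewrite (sum_ext U1 U2 H1 H2) sum_sites.
pose H w := (coin c2 w a)^* * coin c2 w b.
transitivity (\sum_(p <- box a.1 1) (H (d2 L (p, true)) + H (d2 L (p, false)))).
  apply: eq_bigr => p _; rewrite /G /H /= !big_cons !big_nil !addr0 /=.
  have e := unit_cols (hc1 p); move: (e true true) (e true false) (e false true) (e false false).
  rewrite !big_cons !big_nil !addr0 /= => h1 h2 h3 h4.
  by apply: alg2.
rewrite -(sum_sites _ _ (fun w => H (d2 L w))).
transitivity (\sum_(w <- map (d2 L) (sites_of (box a.1 1))) H w).
  by rewrite big_map.
have V1 : uniq (map (d2 L) (sites_of (box a.1 1))).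
  by rewrite (map_inj_uniq (can_inj (f2K L))) U2.
have V2 : uniq [:: (a.1, true); (a.1, false)] by rewrite /= !inE !xpair_eqE /= andbF.
have K1 : forall w, w \in map (d2 L) (sites_of (box a.1 1)) ->
    w \notin [:: (a.1, true); (a.1, false)] -> H w = 0.
  move=> [p s] _; rewrite !inE /H /coin /=.
  case: (eqVneq p a.1) => [->|ne]; first by case: s; rewrite eqxx ?orbT.
  by rewrite natb0 mul0r conjC0 mul0r.
have K2 : forall w, w \in [:: (a.1, true); (a.1, false)] ->
    w \notin map (d2 L) (sites_of (box a.1 1)) -> H w = 0.
  move=> w wl; suff -> : w \in map (d2 L) (sites_of (box a.1 1)) by [].
  rewrite -[w](d2K L) map_f // mem_sites mem_box.
  have [h1 h2] := f2_near L w.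
  have w1 : w.1 = a.1 by move: wl; rewrite !inE => /orP[] /eqP ->.
  move: h1 h2; rewrite w1; lia.
rewrite (sum_ext V1 V2 K1 K2) /H !big_cons big_nil addr0 /coin /= eqxx natb1 !mul1r.
case: (eqVneq a.1 b.1) => [e|ne].
  rewrite natb1 !mul1r e; have := unit_cols (hc2 b.1) a.2 b.2; rewrite !big_cons big_nil addr0 /= => ->.
  congr (_%:R); rewrite [in RHS](surjective_pairing a) [in RHS](surjective_pairing b).
  by rewrite xpair_eqE e eqxx.
rewrite natb0 !mul0r !mulr0 addr0; have -> : (a == b) = false.
  by apply/eqP => e; rewrite e eqxx in ne.
by [].
Qed.

Lemma coin_rows (C : numClosedFieldType) (c2 : point -> 'M[C]_2)
  (hc2 : forall x, c2 x \is unitarymx) (a : point) (e e' : site) :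
  e.1 \in box a 1 ->
  \sum_(w <- nbhd a 1) coin c2 e w * (coin c2 e' w)^* = (e == e')%:R.
Proof.
move=> he.
have V2 : uniq [:: (e.1, true); (e.1, false)] by rewrite /= !inE !xpair_eqE /= andbF.
have K1 : forall w, w \in nbhd a 1 -> w \notin [:: (e.1, true); (e.1, false)] ->
    coin c2 e w * (coin c2 e' w)^* = 0.
  move=> [p s] _; rewrite !inE /coin /=.
  case: (eqVneq e.1 p) => [<-|ne]; first by case: s; rewrite eqxx ?orbT.
  by rewrite natb0 !mul0r.
have K2 : forall w, w \in [:: (e.1, true); (e.1, false)] -> w \notin nbhd a 1 ->
    coin c2 e w * (coin c2 e' w)^* = 0.
  move=> w wl; suff -> : w \in nbhd a 1 by [].
  have w1 : w.1 = e.1 by move: wl; rewrite !inE => /orP[] /eqP ->.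
  by rewrite mem_nbhd w1.
rewrite (sum_ext (nbhd_uniq _ _) V2 K1 K2) !big_cons big_nil addr0 /coin /= eqxx natb1 !mul1r.
case: (eqVneq e'.1 e.1) => [ee|ne].
  rewrite natb1 !mul1r; have := unit_rows (hc2 e.1) e.2 e'.2.
  rewrite !big_cons big_nil addr0 /= => ->.
  congr (_%:R); rewrite [in RHS](surjective_pairing e) [in RHS](surjective_pairing e').
  by rewrite xpair_eqE ee eqxx.
rewrite natb0 !mul0r conjC0 !mulr0 addr0; have -> : (e == e') = false.
  by apply/eqP => ee; rewrite ee eqxx in ne.
by [].
Qed.

Lemma D_rows (C : numClosedFieldType) L (c1 c2 : point -> 'M[C]_2)
  (hc1 : forall x, c1 x \is unitarymx) (hc2 : forall x, c2 x \is unitarymx) a b :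
  \sum_(w <- nbhd a.1 1) Wg (d1 L) (d2 L) c1 c2 a w * (Wg (d1 L) (d2 L) c1 c2 b w)^*
  = (a == b)%:R.
Proof.
have near : forall s, (d2 L ((d1 L a).1, s)).1 \in box a.1 1.
  move=> s; have [h1 h2] := d1_near L a; have [h3 h4] := d2_near L ((d1 L a).1, s).
  rewrite mem_box; move: h1 h2 h3 h4 => /=; lia.
rewrite /Wg; set z := d1 L a; set z' := d1 L b.
transitivity (\sum_(w <- nbhd a.1 1) (
   c1 z.1 (sidx z.2) (sidx true) * (c1 z'.1 (sidx z'.2) (sidx true))^* *
     (coin c2 (d2 L (z.1, true)) w * (coin c2 (d2 L (z'.1, true)) w)^*) +
   c1 z.1 (sidx z.2) (sidx true) * (c1 z'.1 (sidx z'.2) (sidx false))^* *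
     (coin c2 (d2 L (z.1, true)) w * (coin c2 (d2 L (z'.1, false)) w)^*) +
   c1 z.1 (sidx z.2) (sidx false) * (c1 z'.1 (sidx z'.2) (sidx true))^* *
     (coin c2 (d2 L (z.1, false)) w * (coin c2 (d2 L (z'.1, true)) w)^*) +
   c1 z.1 (sidx z.2) (sidx false) * (c1 z'.1 (sidx z'.2) (sidx false))^* *
     (coin c2 (d2 L (z.1, false)) w * (coin c2 (d2 L (z'.1, false)) w)^*))).
  apply: eq_bigr => w _; rewrite !big_cons !big_nil !addr0 !rmorphD !rmorphM /=; ring.
rewrite !big_split /= -!mulr_sumr !(@coin_rows _ _ hc2) ?near //.
rewrite !(inj_eq (can_inj (f2K L))) !xpair_eqE /= !eqxx /= !andbT !andbF.
rewrite -(inj_eq (can_inj (f1K L)) a b) -/z -/z' [in RHS](surjective_pairing z) [in RHS](surjective_pairing z') xpair_eqE.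
case: (eqVneq z.1 z'.1) => [e|ne] /=.
  rewrite natb1 natb0 !mulr1 !mulr0 !addr0 -e.
  by have := unit_rows (hc1 z.1) z.2 z'.2; rewrite !big_cons big_nil addr0 /=.
by rewrite natb0 !mulr0 !addr0.
Qed.

Lemma inL_box L p : (p \in LambdaL L) = inL L p.
Proof. by rewrite /LambdaL mem_box /inL /= !sub0r !add0r. Qed.

Lemma D_comp (C : numClosedFieldType) L (c1 c2 : point -> 'M[C]_2)
  (hc1 : forall x, c1 x \is unitarymx) (hc2 : forall x, c2 x \is unitarymx) :
  compression_unitary L (Wg (d1 L) (d2 L) c1 c2).
Proof.
move=> a b ha hb; rewrite inL_box in ha hb.
have U : uniq (sites_of (LambdaL L)) by apply/sites_uniq/box_uniq.
split.
  rewrite -(@D_cols _ L c1 c2 hc1 hc2 a b); apply: sum_ext => //; first exact: nbhd_uniq.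
    move=> w _ wN; have -> : Wg (d1 L) (d2 L) c1 c2 w a = 0; last by rewrite conjC0 mul0r.
    by apply/eqP; apply: contraNT wN => /D_near /andP[_ h]; rewrite mem_nbhd.
  move=> w _ wS; have -> : Wg (d1 L) (d2 L) c1 c2 w a = 0; last by rewrite conjC0 mul0r.
  apply/eqP; apply: contraNT wS => /D_inL h.
  by rewrite mem_sites inL_box -h.
rewrite -(@D_rows _ L c1 c2 hc1 hc2 a b); apply: sum_ext => //; first exact: nbhd_uniq.
  move=> w _ wN; have -> : Wg (d1 L) (d2 L) c1 c2 a w = 0; last by rewrite mul0r.
  by apply/eqP; apply: contraNT wN => /D_near /andP[h _]; rewrite mem_nbhd.
move=> w _ wS; have -> : Wg (d1 L) (d2 L) c1 c2 a w = 0; last by rewrite mul0r.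
apply/eqP; apply: contraNT wS => /D_inL h.
by rewrite mem_sites inL_box h.
Qed.

Lemma D_unitary (C : numClosedFieldType) L (c1 c2 : point -> 'M[C]_2)
  (hc1 : forall x, c1 x \is unitarymx) (hc2 : forall x, c2 x \is unitarymx) :
  unitary_kernel (Wg (d1 L) (d2 L) c1 c2).
Proof.
exists 1%N; split; first exact: D_band.
by move=> u v; split; [apply: D_cols | apply: D_rows].
Qed.

Lemma coin_nz (C : pzSemiRingType) (c2 : point -> 'M[C]_2) w v :
  coin c2 w v != 0 -> w.1 = v.1.
Proof. by rewrite /coin; case: (eqVneq w.1 v.1) => // _; rewrite natb0 mul0r eqxx. Qed.

Lemma D_diff (C : pzSemiRingType) L (c1 c2 : point -> 'M[C]_2) u v :
  Wg t1 t2 c1 c2 u v <> Wg (d1 L) (d2 L) c1 c2 u v ->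
  in_DeltaLambda2 L u.1 /\ in_DeltaLambda2 L v.1.
Proof.
move=> hne.
case E1: (inL L (u.1.1 - spin u.2, u.1.2) == inL L u.1).
  have e1 : d1 L u = t1 u by rewrite /d1 E1.
  move: hne; rewrite /Wg e1 => hne.
  set p := (t1 u).1.
  have [s hs] : exists s, coin c2 (t2 (p, s)) v != coin c2 (d2 L (p, s)) v.
    case: (eqVneq (coin c2 (t2 (p, true)) v) (coin c2 (d2 L (p, true)) v)) => [ea|na];
      last by exists true.
    case: (eqVneq (coin c2 (t2 (p, false)) v) (coin c2 (d2 L (p, false)) v)) => [eb|nb];
      last by exists false.
    by exfalso; apply: hne; rewrite !big_cons !big_nil ea eb.
  case E2: (inL L (p.1, p.2 - spin s) == inL L p).
    by move: hs; rewrite /d2 /t2 /= E2 eqxx.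
  have hv : v.1 = (p.1, p.2 - spin s) \/ v.1 = p.
    case: (eqVneq (coin c2 (t2 (p, s)) v) 0) => hA.
      rewrite hA eq_sym in hs; right; move/coin_nz: hs.
      by rewrite /d2 /= E2 /= => <-.
    by left; move/coin_nz: hA => <-.
  move: E2 hv; rewrite /p /t1 /=; case: u E1 {hne e1 hs p} => [[x y] su] /= E1.
  case: v => [[vx vy] sv] /= E2 hv.
  case: su E1 E2 hv; case: s; rewrite /inL /= => E1 E2 hv;
    split; apply: geo => /=; case: hv => [[hx hy]|[hx hy]]; lia.
have e1 : d1 L u = (u.1, ~~ u.2) by rewrite /d1 E1.
have hv : (exists s, v.1 = (u.1.1 - spin u.2, u.1.2 - spin s)) \/
          (v.1.1 = u.1.1 /\ u.1.2 - 1 <= v.1.2 <= u.1.2 + 1).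
  case: (eqVneq (Wg t1 t2 c1 c2 u v) 0) => h0.
    have : Wg (d1 L) (d2 L) c1 c2 u v != 0.
      by apply/eqP => h; apply: hne; rewrite h h0.
    move/Wg_nz => [s ->]; rewrite e1; have [h3 h4] := d2_near L (u.1, s).
    by right; split.
  by left; move/Wg_nz: h0 => [s ->]; exists s.
move: E1 hv {hne e1}; case: u => [[x y] su] /=.
case: v => [[vx vy] sv] /= E1 hv.
case: su E1 hv; rewrite /inL /= => E1 hv;
  split; apply: geo => /=; case: hv => [[[] [hx hy]]|[hx hy]]; lia.
Qed.

Theorem mainTheorem5 (R : realType) (L : nat) (c1 c2 : point -> 'M[R[i]]_2)
  (hc1 : forall x, c1 x \is unitarymx) (hc2 : forall x, c2 x \is unitarymx) :
  exists Wd : kernel R[i],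
    [/\ unitary_kernel Wd,
        compression_unitary L Wd &
        forall u v : site, walk c1 c2 u v <> Wd u v ->
          in_DeltaLambda2 L u.1 /\ in_DeltaLambda2 L v.1].
Proof.
exists (Wg (d1 L) (d2 L) c1 c2); split.
- exact: D_unitary.
- exact: D_comp.
- by move=> u v; rewrite walkE; apply: D_diff.
Qed.
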